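(* Let $\mathcal S$ be a trajectory set satisfying (LOP) and (K). Then $\mathcal L^1_{(K)}$ is a vector space containing $\mathcal E$, and $\int_{(K)}:\mathcal L^1_{(K)}\to\mathbb R$ is a linear, positive, constant-preserving extension of $I$ which satisfies: if $f,f_n\in\mathcal L^1_{(K)}$ and $\lim_{n\to\infty}\|f_n-f\|=0$, then $\lim_{n\to\infty}\int_{(K)}f_n=\int_{(K)}f$. Moreover, $\int_{(K)}$ is strictly positive: if $f,g\in\mathcal L^1_{(K)}$ satisfy $f\ge g$ almost everywhere and $\int_{(K)}f=\int_{(K)}g$, then $f=g$ almost everywhere.
   Context: Fix $s_0\in\mathbb R$. A trajectory set is any set $\mathcal S$ of real sequences $S=(S_j)_{j\in\mathbb N_0}$ with $S_0=s_0$. A simple portfolio $(V,n,H)$ consists of $V\in\mathbb R$, $n\in\mathbb N$ and nonanticipating functions $H_i:\mathcal S\to\mathbb R$, $0\le i\le n-1$ (i.e. $H_i(S)=h_i(S_0,\dots,S_i)$ for some arbitrary $h_i:\mathbb R^{i+1}\to\mathbb R$). Its wealth is $\Pi^{V,n,H}_j(S)=V+\sum_{i=0}^{\min\{j,n\}-1}H_i(S)(S_{i+1}-S_i)$ and $\Pi^{V,n,H}_\infty:=\Pi^{V,n,H}_n$; it is positive if $V\ge0$ and $\Pi^{V,n,H}_\infty\ge0$ on $\mathcal S$. A generalized portfolio is a sequence $(V_m,n_m,H_m)_{m\in\mathbb N_0}$ of simple portfolios, positive for every $m\ge1$; it is a positive generalized portfolio if moreover $\Pi^{V_0,n_0,H_0}_j\equiv0$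 for all $j$. A map $f:\mathcal S\to[-\infty,+\infty]$ is superhedged with initial endowment $V=\sum_{m=0}^\infty V_m\in(-\infty,+\infty]$ by such a portfolio if $f\le\sum_{m=0}^\infty\Pi^{V_m,n_m,H_m}_\infty$ on $\mathcal S$. For $f\ge0$, $\bar I(f)$ is the infimum of initial endowments of positive generalized portfolios superhedging $f$; $\bar\sigma(f)$ is the infimum of initial endowments of generalized portfolios superhedging $f$. Let $\mathcal E=\{\Pi^{V,n,H}_\infty\}$ over all simple portfolios. (LOP): whenever two simple portfolios have equal terminal wealth $\Pi_\infty$ at every $S\in\mathcal S$, their initial endowments coincide; under (LOP), $I:\mathcal E\to\mathbb R$, $I(\Pi^{V,n,H}_\infty)=V$, is well defined and linear. (K): $I(f)+\bar I(f^-)\le\bar I(f^+)$ for every $f\in\mathcal E$. Define $\|f\|:=\bar I(|f|)$; null functions are $f$ with $\|f\|=0$, null sets are $A\subseteq\mathcal S$ with $\|\mathbf 1_A\|=0$, and ''almost everywhere'' means outside a null set. Let $\underline\sigma(f)=-\bar\sigma(-f)$, let $\mathcal L^1_{(K)}$ be the set of real-valued financial positions $f$ with $\underline\sigma(f)=\bar\sigma(f)\in\mathbb R$, and set $\int_{(K)}f:=\bar\sigma(f)$ for $f\in\mathcal L^1_{(K)}$. Positive means $f\ge0$ implies $\int_{(K)}f\ge0$; constant-preserving means $\int_{(K)}c=c$ for constants $c$. *)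

(* Defs.v *)
From HB Require Import structures.
From mathcomp Require Import all_boot all_order all_algebra.
From mathcomp Require Import all_classical all_reals all_analysis.
Set Implicit Arguments. Unset Strict Implicit. Unset Printing Implicit Defensive.
Import Order.TTheory GRing.Theory Num.Theory.
Local Open Scope classical_set_scope.
Local Open Scope ring_scope.

Section Defs.
Variable R : realType.

Definition traj := nat -> R.

Definition trajectory_set (s0 : R) (TS : set traj) : Prop :=
  forall S, TS S -> S 0%N = s0.

Definition nonanticipating (i : nat) (h : traj -> R) : Prop :=
  forall S S' : traj, (forall j, (j <= i)%N -> S j = S' j) -> h S = h S'.

Record simple_portfolio := SimplePortfolio {
  sp_V : R;
  sp_n : nat;
  sp_H : nat -> traj -> R;
  sp_na : forall i, (i < sp_n)%N -> nonanticipating i (sp_H i) }.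

Definition wealth (p : simple_portfolio) (j : nat) (S : traj) : R :=
  sp_V p + \sum_(0 <= i < minn j (sp_n p)) sp_H p i S * (S i.+1 - S i).

Definition twealth (p : simple_portfolio) (S : traj) : R := wealth p (sp_n p) S.

Definition positive_sp (TS : set traj) (p : simple_portfolio) : Prop :=
  0 <= sp_V p /\ forall S, TS S -> 0 <= twealth p S.

Definition gen_portfolio (TS : set traj) (P : nat -> simple_portfolio) : Prop :=
  forall m, (1 <= m)%N -> positive_sp TS (P m).

Definition pos_gen_portfolio (TS : set traj) (P : nat -> simple_portfolio) : Prop :=
  gen_portfolio TS P /\ forall j S, TS S -> wealth (P 0%N) j S = 0.

Local Open Scope ereal_scope.

Definition endowment (P : nat -> simple_portfolio) : \bar R :=
  (sp_V (P 0%N))%:E + \sum_(1 <= m <oo) (sp_V (P m))%:E.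

Definition superhedges (TS : set traj) (P : nat -> simple_portfolio)
    (f : traj -> \bar R) : Prop :=
  forall S, TS S ->
    f S <= (twealth (P 0%N) S)%:E + \sum_(1 <= m <oo) (twealth (P m) S)%:E.

Definition Ibar (TS : set traj) (f : traj -> \bar R) : \bar R :=
  ereal_inf [set V | exists P, pos_gen_portfolio TS P /\ superhedges TS P f
                               /\ V = endowment P].

Definition sigmabar (TS : set traj) (f : traj -> \bar R) : \bar R :=
  ereal_inf [set V | exists P, gen_portfolio TS P /\ superhedges TS P f
                               /\ V = endowment P].

Definition sigmaund (TS : set traj) (f : traj -> \bar R) : \bar R :=
  - sigmabar TS (fun S => - f S).

Definition LOP (TS : set traj) : Prop :=
  forall p q, (forall S, TS S -> twealth p S = twealth q S) -> sp_V p = sp_V q.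

(* (K): I(f) + \bar I(f^-) <= \bar I(f^+) for f = Pi_infty in E, I(f) = V. *)
Definition condK (TS : set traj) : Prop :=
  forall p : simple_portfolio,
    (sp_V p)%:E + Ibar TS (fun S => (Num.max (- twealth p S) 0%R)%:E)
      <= Ibar TS (fun S => (Num.max (twealth p S) 0%R)%:E).

Definition normK (TS : set traj) (f : traj -> R) : \bar R :=
  Ibar TS (fun S => (`|f S|)%:E).

Definition null_set (TS : set traj) (A : set traj) : Prop :=
  Ibar TS (fun S => (\1_A S : R)%:E) = 0.

Definition ae (TS : set traj) (Q : traj -> Prop) : Prop :=
  exists A, null_set TS A /\ forall S, TS S -> ~ A S -> Q S.

Definition L1K (TS : set traj) (f : traj -> R) : Prop :=
  exists r : R, sigmabar TS (fun S => (f S)%:E) = r%:E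
             /\ sigmaund TS (fun S => (f S)%:E) = r%:E.

Definition intK (TS : set traj) (f : traj -> R) : R :=
  fine (sigmabar TS (fun S => (f S)%:E)).

End Defs.

(* Main.v *)
Require Import Defs.
From HB Require Import structures.
From mathcomp Require Import all_boot all_order all_algebra.
From mathcomp Require Import all_classical all_reals all_analysis.
From mathcomp Require Import zify ring lra.
Set Implicit Arguments. Unset Strict Implicit. Unset Printing Implicit Defensive.
Import Order.TTheory GRing.Theory Num.Theory numFieldNormedType.Exports.
Local Open Scope classical_set_scope.
Local Open Scope ring_scope.

Section Port.
Variable R : realType.
Implicit Types p q : simple_portfolio R.

Lemma sum_cut (F : nat -> R) (N n : nat) :
  \sum_(0 <= i < N) (if (i < n)%N then F i else 0) = \sum_(0 <= i < minn N n) F i.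
Proof.
case: (leqP N n) => hNn.
  apply: eq_big_nat => i /andP[_ hi].
  by rewrite (leq_trans hi hNn).
rewrite (@big_cat_nat _ _ _ n 0 N _ _ (leq0n n) (ltnW hNn)) /=.
rewrite [X in _ + X]big1_seq ?addr0; last first.
  by move=> i /andP[_]; rewrite mem_index_iota => /andP[hi _]; rewrite ltnNge hi.
by apply: eq_big_nat => i /andP[_ ->].
Qed.

Definition spD_H p q (i : nat) (S : traj R) : R :=
  (if (i < sp_n p)%N then sp_H p i S else 0) +
  (if (i < sp_n q)%N then sp_H q i S else 0).

Lemma spD_na p q i : (i < maxn (sp_n p) (sp_n q))%N -> nonanticipating i (spD_H p q i).
Proof.
move=> _ S S' E; rewrite /spD_H.
case: ifP => hp; case: ifP => hq //.
- by rewrite (sp_na hp E) (sp_na hq E).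
- by rewrite (sp_na hp E).
- by rewrite (sp_na hq E).
Qed.

Definition spD p q := @SimplePortfolio R (sp_V p + sp_V q) (maxn (sp_n p) (sp_n q)) (spD_H p q) (@spD_na p q).

Lemma sum_cut2 (F G : nat -> R) (N n : nat) :
  \sum_(0 <= i < N) (if (i < n)%N then F i else 0) * G i =
  \sum_(0 <= i < minn N n) F i * G i.
Proof.
rewrite -sum_cut; apply: eq_bigr => i _; by case: ifP; rewrite ?mul0r.
Qed.

Lemma wealth_spD p q j S : wealth (spD p q) j S = wealth p j S + wealth q j S.
Proof.
rewrite /wealth /= /spD_H.
under eq_bigr do rewrite mulrDl.
rewrite big_split /= !sum_cut2.
have -> : minn (minn j (maxn (sp_n p) (sp_n q))) (sp_n p) = minn j (sp_n p) by lia.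
have -> : minn (minn j (maxn (sp_n p) (sp_n q))) (sp_n q) = minn j (sp_n q) by lia.
by rewrite addrACA.
Qed.

Lemma wealth_ge p j S : (sp_n p <= j)%N -> wealth p j S = twealth p S.
Proof. by move=> h; rewrite /twealth /wealth (minn_idPr h) minnn. Qed.

Lemma twealth_spD p q S : twealth (spD p q) S = twealth p S + twealth q S.
Proof.
rewrite /twealth wealth_spD /= !wealth_ge //; by rewrite ?leq_maxl ?leq_maxr.
Qed.

Lemma wealth0 p S : wealth p 0 S = sp_V p.
Proof. by rewrite /wealth min0n big_geq // addr0. Qed.

Definition spZ_H (c : R) p (i : nat) (S : traj R) : R := c * sp_H p i S.

Lemma spZ_na c p i : (i < sp_n p)%N -> nonanticipating i (spZ_H c p i).
Proof. by move=> hi S S' E; rewrite /spZ_H (sp_na hi E). Qed.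

Definition spZ (c : R) p := @SimplePortfolio R (c * sp_V p) (sp_n p) (spZ_H c p) (@spZ_na c p).

Lemma wealth_spZ c p j S : wealth (spZ c p) j S = c * wealth p j S.
Proof.
rewrite /wealth /= /spZ_H mulrDr mulr_sumr; congr (_ + _).
by apply: eq_bigr => i _; rewrite mulrA.
Qed.

Lemma twealth_spZ c p S : twealth (spZ c p) S = c * twealth p S.
Proof. exact: wealth_spZ. Qed.

Definition spN p := spZ (-1) p.

Lemma twealth_spN p S : twealth (spN p) S = - twealth p S.
Proof. by rewrite twealth_spZ mulN1r. Qed.

Lemma spN_V p : sp_V (spN p) = - sp_V p.
Proof. by rewrite /= mulN1r. Qed.

Definition spc_H (i : nat) (S : traj R) : R := 0.
Lemma spc_na (i : nat) : (i < 0)%N -> nonanticipating i (spc_H i).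
Proof. by []. Qed.

Definition spc (c : R) := @SimplePortfolio R c 0 spc_H spc_na.

Lemma wealth_spc c j S : wealth (spc c) j S = c.
Proof. by rewrite /wealth /= minn0 big_geq // addr0. Qed.

Lemma twealth_spc c S : twealth (spc c) S = c.
Proof. exact: wealth_spc. Qed.

Definition sp0 := spc 0.

End Port.
Arguments sp0 {R}.
Arguments spc {R}.

Section Gen.
Variable R : realType.
Variable TS : set (traj R).
Local Open Scope ereal_scope.
Implicit Types P Q : nat -> simple_portfolio R.

Definition Phi P (S : traj R) : \bar R :=
  (twealth (P 0%N) S)%:E + \sum_(1 <= m <oo) (twealth (P m) S)%:E.

Lemma superhedgesE P f : superhedges TS P f <-> forall S, TS S -> f S <= Phi P S.
Proof. by []. Qed.

Lemma gen_tw P m S : gen_portfolio TS P -> (1 <= m)%N -> TS S -> 0 <= (twealth (P m) S)%:E.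
Proof. by move=> hP hm hS; rewrite lee_fin; case: (hP m hm) => _; apply. Qed.

Lemma gen_V P m : gen_portfolio TS P -> (1 <= m)%N -> 0 <= (sp_V (P m))%:E.
Proof. by move=> hP hm; rewrite lee_fin; case: (hP m hm). Qed.

Lemma gen_sumtw P S : gen_portfolio TS P -> TS S -> 0 <= \sum_(1 <= m <oo) (twealth (P m) S)%:E.
Proof. by move=> hP hS; apply: nneseries_ge0 => n hn _; exact: gen_tw. Qed.

Lemma gen_sumV P : gen_portfolio TS P -> 0 <= \sum_(1 <= m <oo) (sp_V (P m))%:E.
Proof. by move=> hP; apply: nneseries_ge0 => n hn _; exact: gen_V. Qed.

Lemma pos_gen P : pos_gen_portfolio TS P -> gen_portfolio TS P.
Proof. by case. Qed.

Definition gD P Q := fun m => spD (P m) (Q m).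

Lemma gen_gD P Q : gen_portfolio TS P -> gen_portfolio TS Q -> gen_portfolio TS (gD P Q).
Proof.
move=> hP hQ m hm; case: (hP m hm) => hV1 hW1; case: (hQ m hm) => hV2 hW2.
split; first by rewrite /= addr_ge0.
by move=> S hS; rewrite twealth_spD addr_ge0 //; [exact: hW1|exact: hW2].
Qed.

Lemma pos_gD P Q : pos_gen_portfolio TS P -> pos_gen_portfolio TS Q ->
  pos_gen_portfolio TS (gD P Q).
Proof.
move=> [hP hP0] [hQ hQ0]; split; first exact: gen_gD.
by move=> j S hS; rewrite wealth_spD hP0 // hQ0 // addr0.
Qed.

Lemma Phi_gD P Q S : gen_portfolio TS P -> gen_portfolio TS Q -> TS S ->
  Phi (gD P Q) S = Phi P S + Phi Q S.
Proof.
move=> hP hQ hS; rewrite /Phi /gD twealth_spD EFinD.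
under eq_eseriesr do rewrite twealth_spD EFinD.
rewrite nneseriesD; last 2 first.
- by move=> i hi _; exact: gen_tw.
- by move=> i hi _; exact: gen_tw.
by rewrite addeACA.
Qed.

Lemma end_gD P Q : gen_portfolio TS P -> gen_portfolio TS Q ->
  endowment (gD P Q) = endowment P + endowment Q.
Proof.
move=> hP hQ; rewrite /endowment /gD /= EFinD.
under eq_eseriesr do rewrite EFinD.
rewrite nneseriesD; last 2 first.
- by move=> i hi _; exact: gen_V.
- by move=> i hi _; exact: gen_V.
by rewrite addeACA.
Qed.

Definition gZ (c : R) P := fun m => spZ c (P m).

Lemma gen_gZ c P : (0 <= c)%R -> gen_portfolio TS P -> gen_portfolio TS (gZ c P).
Proof.
move=> hc hP m hm; case: (hP m hm) => hV hW; split; first by rewrite /= mulr_ge0.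
by move=> S hS; rewrite twealth_spZ mulr_ge0 //; exact: hW.
Qed.

Lemma nneseriesZ1 (c : R) (f : nat -> \bar R) :
  (forall i, (1 <= i)%N -> 0 <= f i) ->
  \sum_(1 <= m <oo) (c%:E * f m) = c%:E * \sum_(1 <= m <oo) f m.
Proof.
move=> h; rewrite eseries_cond [in RHS]eseries_cond nneseriesZl //.
Qed.

Lemma Phi_gZ c P S : (0 <= c)%R -> gen_portfolio TS P -> TS S ->
  Phi (gZ c P) S = c%:E * Phi P S.
Proof.
move=> hc hP hS; rewrite /Phi /gZ twealth_spZ EFinM.
under eq_eseriesr do rewrite twealth_spZ EFinM.
rewrite nneseriesZ1; last by move=> i hi; exact: gen_tw.
by rewrite muleDr // fin_num_adde_defr.
Qed.

Lemma end_gZ c P : (0 <= c)%R -> gen_portfolio TS P ->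
  endowment (gZ c P) = c%:E * endowment P.
Proof.
move=> hc hP; rewrite /endowment /gZ /= EFinM.
under eq_eseriesr do rewrite EFinM.
rewrite nneseriesZ1; last by move=> i hi; exact: gen_V.
by rewrite muleDr // fin_num_adde_defr.
Qed.

Definition pz P := fun m => if m == 0%N then sp0 else P m.

Lemma pos_pz P : gen_portfolio TS P -> pos_gen_portfolio TS (pz P).
Proof.
move=> hP; split; last by move=> j S _; rewrite /pz /= wealth_spc.
by move=> m hm; rewrite /pz; case: eqP => [e|_]; [rewrite e in hm|exact: hP].
Qed.

Lemma Phi_pz P S : Phi (pz P) S = \sum_(1 <= m <oo) (twealth (P m) S)%:E.
Proof.
rewrite /Phi /pz /= twealth_spc add0e eseries_cond [RHS]eseries_cond.
by apply: eq_eseriesr => -[|i].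
Qed.

Lemma end_pz P : endowment (pz P) = \sum_(1 <= m <oo) (sp_V (P m))%:E.
Proof.
rewrite /endowment /pz /= add0e eseries_cond [RHS]eseries_cond.
by apply: eq_eseriesr => -[|i].
Qed.

Definition g1 p := fun m => if m == 0%N then p else (sp0 : simple_portfolio R).

Lemma gen_g1 p : gen_portfolio TS (g1 p).
Proof.
move=> m hm; rewrite /g1; case: eqP => [e|_]; first by rewrite e in hm.
by split => //= S _; rewrite twealth_spc.
Qed.

Lemma Phi_g1 p S : Phi (g1 p) S = (twealth p S)%:E.
Proof.
rewrite /Phi /g1 /= eseries0 ?adde0 // => -[|i] //= _ _.
by rewrite twealth_spc.
Qed.

Lemma end_g1 p : endowment (g1 p) = (sp_V p)%:E.
Proof.
by rewrite /endowment /g1 /= eseries0 ?adde0 // => -[|i].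
Qed.

End Gen.

Section Ereal_helpers.
Variable R : realType.
Local Open Scope ereal_scope.

Lemma H1 (a : R) (y : \bar R) : 0 <= a%:E + y -> (-a)%:E <= y.
Proof.
case: y => [r||] h; last by move: h; rewrite addeNy.
- by rewrite -EFinD !lee_fin in h *; rewrite -subr_ge0 opprK addrC.
- by rewrite leey.
Qed.

Lemma H2 (a b : R) (y : \bar R) : a%:E + y <= b%:E -> y <= (b - a)%:E.
Proof.
case: y => [r||] h; last by rewrite leNye.
- by rewrite -EFinD !lee_fin in h *; rewrite lerBrDl.
- by move: h; rewrite addey.
Qed.

Lemma H3 (u : R) (y : \bar R) : y < u%:E -> exists x : R, y < x%:E /\ (x < u)%R.
Proof.
case: y => [r||] h.
- rewrite lte_fin in h; exists ((r + u) / 2)%R; rewrite lte_fin; split.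
  + by rewrite ltr_pdivlMr // mulrDr mulr1 ltrD2l.
  + by rewrite ltr_pdivrMr // mulrDr mulr1 ltrD2r.
- by [].
- by exists (u - 1)%R; split; [rewrite ltNye|rewrite ltrBlDr ltrDl].
Qed.

Lemma H4 (a : R) (y : \bar R) : (-a)%:E <= y -> 0 <= a%:E + y.
Proof.
case: y => [r||] h; last by [].
- by rewrite -EFinD !lee_fin in h *; rewrite -(opprK a) addrC subr_ge0.
- by rewrite addey.
Qed.

Lemma le_eps (y : \bar R) (r : R) : (forall e : R, (0 < e)%R -> y < (r + e)%:E) -> y <= r%:E.
Proof.
move=> h; apply/lee_addgt0Pr => e he; rewrite -EFinD; exact/ltW/h.
Qed.

End Ereal_helpers.

Section Ser.
Variable R : realType.
Local Open Scope ereal_scope.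

Lemma term_le_ser (a : nat -> \bar R) n : (forall k, 0 <= a k) -> a n <= \sum_(k <oo) a k.
Proof.
move=> h; rewrite (@nneseriesD1 _ a n xpredT) //; apply: leeDl.
by apply: nneseries_ge0 => k _ _.
Qed.

Lemma ser_shift1 (a : nat -> \bar R) : (forall m, (1 <= m)%N -> 0 <= a m) ->
  \sum_(1 <= m <oo) a m = \sum_(j <oo) a j.+1.
Proof.
move=> h; pose a' m := if m is 0%N then 0 else a m.
have h' : forall m, 0 <= a' m by case=> [|m] //=; apply: h.
have := nneseries_addn 1 h'.
rewrite (@eq_eseriesr _ (fun i => a' (i + 1)%N) (fun j => a j.+1)); last by move=> i _; rewrite addn1.
move=> ->; rewrite eseries_cond [RHS]eseries_cond.
by apply: eq_eseriesr => -[|i].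
Qed.

Lemma ser_double (phi : nat -> nat * nat) (b : nat -> nat -> \bar R) :
  set_bij [set: nat] [set: nat * nat] phi ->
  (forall k i, 0 <= b k i) ->
  \sum_(j <oo) b (phi j).1 (phi j).2 = \sum_(k <oo) \sum_(i <oo) b k i.
Proof.
move=> hphi hb.
rewrite nneseries_esumT; last by move=> j.
rewrite -(@reindex_esum _ _ _ [set: nat] [set: nat * nat] phi (fun z => b z.1 z.2)) //.
rewrite nneseries_esumT; last by move=> k; apply: nneseries_ge0.
rewrite (_ : [set: nat * nat] = [set: nat] `*`` (fun=> [set: nat])); last by apply/seteqP; split.
rewrite -(@esum_esum _ _ _ [set: nat] (fun=> [set: nat]) b) //.
by apply: eq_esum => k _; rewrite nneseries_esumT.
Qed.

Lemma nat2_bij : exists phi : nat -> nat * nat, set_bij [set: nat] [set: nat * nat] phi.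
Proof.
have /ppcard_eqP[f] : ([set: nat] #= [set: nat * nat])%card.
  by rewrite card_eq_sym; exact: card_nat2.
by exists f.
Qed.

End Ser.

Section Main.
Variable R : realType.
Variable TS : set (traj R).
Hypothesis hLOP : LOP TS.
Hypothesis hK : condK TS.
Local Open Scope ereal_scope.
Implicit Types P Q : nat -> simple_portfolio R.

Lemma TS_ne : exists S, TS S.
Proof.
apply: contrapT => hne.
have h : sp_V (spc (0:R)) = sp_V (spc 1).
  by apply: hLOP => S hS; exfalso; apply: hne; exists S.
by move: h => /= /eqP; rewrite eq_sym oner_eq0.
Qed.

Lemma pos_V0 P : pos_gen_portfolio TS P -> sp_V (P 0%N) = 0%R.
Proof.
move=> [_ h]; have [S hS] := TS_ne; by rewrite -(wealth0 (P 0%N) S) h.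
Qed.

Lemma end_pos_ge0 P : pos_gen_portfolio TS P -> 0 <= endowment P.
Proof.
move=> hP; rewrite /endowment pos_V0 // add0e; exact: (gen_sumV (pos_gen hP)).
Qed.

Lemma Ibar_ge0 f : 0 <= Ibar TS f.
Proof. by apply: le_ereal_inf_tmp => _ [P [hP [_ ->]]]; exact: end_pos_ge0. Qed.

Lemma Ibar_le P f : pos_gen_portfolio TS P -> superhedges TS P f -> Ibar TS f <= endowment P.
Proof. by move=> hP hs; apply: ereal_inf_lbound; exists P. Qed.

Lemma sig_le P f : gen_portfolio TS P -> superhedges TS P f -> sigmabar TS f <= endowment P.
Proof. by move=> hP hs; apply: ereal_inf_lbound; exists P. Qed.

Lemma Ibar_lt f x : Ibar TS f < x ->
  exists P, [/\ pos_gen_portfolio TS P, superhedges TS P f & endowment P < x].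
Proof. by move=> /ereal_inf_lt[_ [P [hP [hs ->]]] h]; exists P. Qed.

Lemma sig_lt f x : sigmabar TS f < x ->
  exists P, [/\ gen_portfolio TS P, superhedges TS P f & endowment P < x].
Proof. by move=> /ereal_inf_lt[_ [P [hP [hs ->]]] h]; exists P. Qed.

Lemma sig_le_Ibar f : sigmabar TS f <= Ibar TS f.
Proof.
apply: ereal_inf_le_tmp => _ [P [hP [hs ->]]]; exists P; split => //; exact: pos_gen.
Qed.

Lemma Ibar_mono f g : (forall S, TS S -> f S <= g S) -> Ibar TS f <= Ibar TS g.
Proof.
move=> fg; apply: ereal_inf_le_tmp => _ [P [hP [hs ->]]]; exists P; split => //.
by split => // S hS; apply: le_trans (fg S hS) (hs S hS).
Qed.

Lemma sig_mono f g : (forall S, TS S -> f S <= g S) -> sigmabar TS f <= sigmabar TS g.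
Proof.
move=> fg; apply: ereal_inf_le_tmp => _ [P [hP [hs ->]]]; exists P; split => //.
by split => // S hS; apply: le_trans (fg S hS) (hs S hS).
Qed.

Lemma Kstep P : gen_portfolio TS P -> (forall S, TS S -> 0 <= Phi P S) ->
  (- sp_V (P 0%N))%:E + Ibar TS (fun S => (Num.max (twealth (P 0%N) S) 0%R)%:E)
  <= \sum_(1 <= m <oo) (sp_V (P m))%:E.
Proof.
move=> hP h0; have := hK (spN (P 0%N)); rewrite spN_V.
have -> : (fun S => (Num.max (- twealth (spN (P 0%N)) S) 0%R)%:E) =
          (fun S => (Num.max (twealth (P 0%N) S) 0%R)%:E).
  by apply: funext => S; rewrite twealth_spN opprK.
move=> /le_trans; apply; rewrite -end_pz; apply: Ibar_le; first exact: pos_pz.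
move=> S hS; rewrite -/(Phi (pz P) S) Phi_pz twealth_spN EFin_max ge_max; apply/andP; split.
  by apply: H1; exact: h0.
exact: (gen_sumtw hP hS).
Qed.

Lemma lemA P : gen_portfolio TS P -> (forall S, TS S -> 0 <= Phi P S) -> 0 <= endowment P.
Proof.
move=> hP h0; apply: H4; apply: le_trans (Kstep hP h0).
by apply: leeDl; exact: Ibar_ge0.
Qed.

Lemma sig_ge0 f : (forall S, TS S -> 0 <= f S) -> 0 <= sigmabar TS f.
Proof.
move=> hf; apply: le_ereal_inf_tmp => _ [P [hP [hs ->]]]; apply: lemA => // S hS.
exact: le_trans (hf S hS) (hs S hS).
Qed.

Lemma sig_add_lt f g x y : sigmabar TS f < x -> sigmabar TS g < y ->
  sigmabar TS (fun S => f S + g S) < x + y.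
Proof.
move=> /sig_lt[P [hP hsP hx]] /sig_lt[Q [hQ hsQ hy]].
apply: le_lt_trans (sig_le (gen_gD hP hQ) _) _.
  by move=> S hS; rewrite -/(Phi (gD P Q) S) (Phi_gD hP hQ hS); apply: leeD; [exact: hsP|exact: hsQ].
by rewrite (end_gD hP hQ); exact: lteD.
Qed.

Lemma sig_Z_lt (c x : R) f : (0 < c)%R -> sigmabar TS f < x%:E ->
  sigmabar TS (fun S => c%:E * f S) < (c * x)%:E.
Proof.
move=> hc /sig_lt[P [hP hsP hx]].
apply: le_lt_trans (sig_le (gen_gZ (ltW hc) hP) _) _.
  by move=> S hS; rewrite -/(Phi (gZ c P) S) (Phi_gZ (ltW hc) hP hS); apply: lee_wpmul2l; [rewrite lee_fin ltW|exact: hsP].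
by rewrite (end_gZ (ltW hc) hP) EFinM lte_pmul2l.
Qed.

Lemma sig_simple p f : (forall S, TS S -> f S <= (twealth p S)%:E) -> sigmabar TS f <= (sp_V p)%:E.
Proof.
move=> h; rewrite -(end_g1 p); apply: sig_le; first exact: gen_g1.
by move=> S hS; rewrite -/(Phi (g1 p) S) Phi_g1; exact: h.
Qed.

Definition sig (h : traj R -> R) := sigmabar TS (fun S => (h S)%:E).
Definition val (h : traj R -> R) (u : R) :=
  sig h = u%:E /\ sig (fun S => - h S)%R = (-u)%:E.

Lemma sig_addR f g (x y : R) : sig f < x%:E -> sig g < y%:E ->
  sig (fun S => f S + g S)%R < (x + y)%:E.
Proof.
move=> h1 h2; rewrite /sig EFinD.
have -> : (fun S => (f S + g S)%:E) = (fun S => (f S)%:E + (g S)%:E).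
  by apply: funext => S; rewrite EFinD.
exact: sig_add_lt.
Qed.

Lemma sig_ZR (c x : R) f : (0 < c)%R -> sig f < x%:E ->
  sig (fun S => c * f S)%R < (c * x)%:E.
Proof.
move=> hc h; rewrite /sig.
have -> : (fun S => (c * f S)%:E) = (fun S => c%:E * (f S)%:E).
  by apply: funext => S; rewrite EFinM.
exact: sig_Z_lt.
Qed.

Lemma sig_lower h u : sig (fun S => - h S)%R <= (-u)%:E -> u%:E <= sig h.
Proof.
move=> hN; rewrite leNgt; apply/negP => /H3 [x [hx xu]].
have hy : sig (fun S => - h S)%R < (- u + (u - x) / 2)%:E.
  apply: le_lt_trans hN _; rewrite lte_fin ltrDl divr_gt0 // subr_gt0 //.
have := sig_addR hx hy.
have -> : (fun S => h S + - h S)%R = (fun _ => 0%R) by apply: funext => S; rewrite subrr.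
rewrite ltNge => /negP; apply; apply: le_trans (sig_ge0 _); last by [].
by rewrite lee_fin; lra.
Qed.

Lemma val_of h u : sig h <= u%:E -> sig (fun S => - h S)%R <= (-u)%:E -> val h u.
Proof.
move=> h1 h2; split; apply/le_anti/andP; split => //.
- exact: sig_lower.
- apply: sig_lower.
  have -> : (fun S => - - h S)%R = h by apply: funext => S; rewrite opprK.
  by rewrite opprK.
Qed.

Lemma val_L1K h u : val h u -> L1K TS h /\ intK TS h = u.
Proof.
move=> [h1 h2]; split; last by rewrite /intK; move: h1; rewrite /sig => ->.
exists u; split => //; rewrite /sigmaund.
have -> : (fun S => - (h S)%:E) = (fun S => (- h S)%:E) by apply: funext => S; rewrite EFinN.
by move: h2; rewrite /sig => ->; rewrite EFinN oppeK.
Qed.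

Lemma L1K_val h : L1K TS h -> val h (intK TS h).
Proof.
move=> [r [h1 h2]]; rewrite /intK h1 /=; split => //.
move: h2; rewrite /sigmaund /sig.
have -> : (fun S => - (h S)%:E) = (fun S => (- h S)%:E) by apply: funext => S; rewrite EFinN.
by move=> h2; rewrite EFinN -h2 oppeK.
Qed.

Lemma val_N h u : val h u -> val (fun S => - h S)%R (- u)%R.
Proof.
move=> [h1 h2]; split => //.
have -> : (fun S => - - h S)%R = h by apply: funext => S; rewrite opprK.
by rewrite opprK.
Qed.

Lemma val_D f g a b : val f a -> val g b -> val (fun S => f S + g S)%R (a + b)%R.
Proof.
move=> [f1 f2] [g1 g2]; apply: val_of.
- apply: le_eps => e he.
  have -> : (a + b + e = (a + e / 2) + (b + e / 2))%R by field.
  by apply: sig_addR; [rewrite f1|rewrite g1]; rewrite lte_fin ltrDl divr_gt0.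
- have -> : (fun S => - (f S + g S))%R = (fun S => - f S + - g S)%R.
    by apply: funext => S; rewrite opprD.
  apply: le_eps => e he.
  have -> : (- (a + b)%R + e = (- a + e / 2) + (- b + e / 2))%R by field.
  by apply: sig_addR; [rewrite f2|rewrite g2]; rewrite lte_fin ltrDl divr_gt0.
Qed.

Lemma val_Zpos c f a : (0 < c)%R -> val f a -> val (fun S => c * f S)%R (c * a)%R.
Proof.
move=> hc [f1 f2]; apply: val_of.
- apply: le_eps => e he.
  have -> : (c * a + e = c * (a + e / c))%R by field; rewrite gt_eqF.
  by apply: sig_ZR => //; rewrite f1 lte_fin ltrDl divr_gt0.
- have -> : (fun S => - (c * f S))%R = (fun S => c * - f S)%R.
    by apply: funext => S; rewrite mulrN.
  apply: le_eps => e he.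
  have -> : (- (c * a)%R + e = c * (- a + e / c))%R by field; rewrite gt_eqF.
  by apply: sig_ZR => //; rewrite f2 lte_fin ltrDl divr_gt0.
Qed.

Lemma val_cst (c : R) : val (fun _ => c) c.
Proof.
apply: val_of.
- by apply: (@sig_simple (spc c)) => S _; rewrite twealth_spc.
- by apply: (@sig_simple (spc (- c))) => S _; rewrite twealth_spc.
Qed.

Lemma val_tw p : val (twealth p) (sp_V p).
Proof.
apply: val_of.
- exact: sig_simple.
- by rewrite -spN_V; apply: sig_simple => S _; rewrite twealth_spN.
Qed.

Lemma val_Z c f a : val f a -> val (fun S => c * f S)%R (c * a)%R.
Proof.
move=> hf; case: (ltgtP c 0%R) => hc.
- have hc' : (0 < - c)%R by rewrite oppr_gt0.
  have := val_Zpos hc' (val_N hf).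
  have -> : (fun S => - c * - f S)%R = (fun S => c * f S)%R.
    by apply: funext => S; rewrite mulrNN.
  by rewrite mulrNN.
- exact: val_Zpos.
- rewrite hc mul0r.
  have -> : (fun S => 0 * f S)%R = (fun _ => 0%R) by apply: funext => S; rewrite mul0r.
  exact: val_cst.
Qed.

Lemma val_pos f a : val f a -> (forall S, TS S -> (0 <= f S)%R) -> (0 <= a)%R.
Proof.
move=> [f1 _] hf; rewrite -lee_fin -f1; apply: sig_ge0 => S hS; rewrite lee_fin; exact: hf.
Qed.

Lemma sig_le_norm g : sig g <= normK TS g.
Proof.
apply: le_trans (sig_le_Ibar _); apply: sig_mono => S _; rewrite lee_fin; exact: ler_norm.
Qed.

Lemma val_close f g a b (e : R) : val f a -> val g b ->
  normK TS (fun S => g S - f S)%R < e%:E -> (`|a - b| < e + e)%R.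
Proof.
move=> [f1 f2] [g1 g2] hn.
have hgf : sig (fun S => g S - f S)%R < e%:E := le_lt_trans (sig_le_norm _) hn.
have hfg : sig (fun S => f S - g S)%R < e%:E.
  apply: le_lt_trans (sig_le_norm _) _; apply: le_lt_trans hn.
  by apply: Ibar_mono => S _; rewrite distrC.
have he : (0 < e)%R.
  by rewrite -lte_fin; apply: le_lt_trans hn; exact: Ibar_ge0.
have h1 : sig g < (a + e + e)%:E.
  have -> : g = (fun S => f S + (g S - f S))%R by apply: funext => S; rewrite addrC subrK.
  by apply: sig_addR => //; rewrite f1 lte_fin ltrDl.
have h2 : sig (fun S => - g S)%R < (- a + e + e)%:E.
  have -> : (fun S => - g S)%R = (fun S => - f S + (f S - g S))%R.
    by apply: funext => S; rewrite addKr.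
  by apply: sig_addR => //; rewrite f2 lte_fin ltrDl.
rewrite g1 lte_fin in h1; rewrite g2 lte_fin in h2.
by rewrite ltr_norml; apply/andP; split; lra.
Qed.

Lemma cvg0_lt (u : nat -> \bar R) (e : R) : u n @[n --> \oo] --> 0 -> (0 < e)%R ->
  \forall n \near \oo, u n < e%:E.
Proof.
move=> /fine_cvgP[hfin /cvgrPdist_lt hc] he.
have hc' := hc e he.
near=> n.
have fn : u n \is a fin_num by near: n; exact: hfin.
have hn : (`|0 - fine (u n)| < e)%R by near: n; exact: hc'.
rewrite -(fineK fn) lte_fin; rewrite sub0r normrN in hn.
exact: le_lt_trans (ler_norm _) hn.
Unshelve. all: by end_near.
Qed.

Fixpoint qs P n : simple_portfolio R :=
  if n is n'.+1 then spD (qs P n') (P n) else P 0%N.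

Definition Pn P n := fun m =>
  if (m <= n)%N then (if m == 0%N then qs P n else sp0) else P m.

Lemma ser_split (a : nat -> \bar R) n : (forall m, (1 <= m)%N -> 0 <= a m) ->
  \sum_(1 <= m <oo) a m = \sum_(1 <= m < n.+1) a m + \sum_(n.+1 <= m <oo) a m.
Proof. move=> h; rewrite (nneseries_split 1 n) //. Qed.

Lemma ser_tail (a b : nat -> \bar R) n : (forall m, (1 <= m)%N -> 0 <= a m) ->
  (forall m, (1 <= m)%N -> (m <= n)%N -> b m = 0) -> (forall m, (n < m)%N -> b m = a m) ->
  \sum_(1 <= m <oo) b m = \sum_(n.+1 <= m <oo) a m.
Proof.
move=> ha hb1 hb2.
have hb : forall m, (1 <= m)%N -> 0 <= b m.
  move=> m hm; case: (leqP m n) => hmn; first by rewrite hb1.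
  by rewrite hb2 //; exact: ha.
rewrite (nneseries_split 1 n hb).
rewrite big1_seq; last first.
  move=> i /andP[_]; rewrite mem_index_iota => /andP[hi hi']; exact: hb1.
rewrite add0e eseries_cond [RHS]eseries_cond; apply: eq_eseriesr => i /andP[_ hi]; exact: hb2.
Qed.

Section QS.
Variable F : simple_portfolio R -> R.
Hypothesis FD : forall p q, F (spD p q) = (F p + F q)%R.
Hypothesis F0 : F sp0 = 0%R.

Lemma F_qs P n : F (qs P n) = (F (P 0%N) + \sum_(1 <= m < n.+1) F (P m))%R.
Proof.
elim: n => [|n IH] /=; first by rewrite big_geq // addr0.
by rewrite FD IH [in RHS]big_nat_recr //= addrA.
Qed.

Lemma F_Pn P n : (forall m, (1 <= m)%N -> (0 <= F (P m))%R) ->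
  \sum_(1 <= m <oo) (F (Pn P n m))%:E = \sum_(n.+1 <= m <oo) (F (P m))%:E.
Proof.
move=> h; apply: ser_tail.
- by move=> m hm; rewrite lee_fin; exact: h.
- by move=> m hm hmn; rewrite /Pn hmn; case: m hm {hmn} => // m _; rewrite F0.
- by move=> m hm; rewrite /Pn leqNgt hm.
Qed.

Lemma F_Pn_all P n : (forall m, (1 <= m)%N -> (0 <= F (P m))%R) ->
  (F (Pn P n 0%N))%:E + \sum_(1 <= m <oo) (F (Pn P n m))%:E =
  (F (P 0%N))%:E + \sum_(1 <= m <oo) (F (P m))%:E.
Proof.
move=> h; rewrite F_Pn // [in RHS](ser_split n); last by move=> m hm; rewrite lee_fin h.
rewrite /Pn leq0n eqxx F_qs EFinD sumEFin; by rewrite addeA.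
Qed.

End QS.

Lemma gen_Pn P n : gen_portfolio TS P -> gen_portfolio TS (Pn P n).
Proof.
move=> hP m hm; rewrite /Pn; case: ifP => _; last exact: hP.
case: eqP => [e|_]; first by rewrite e in hm.
by split => //= S _; rewrite twealth_spc.
Qed.

Lemma lemB0 P f : gen_portfolio TS P -> (forall S, TS S -> 0 <= f S) -> superhedges TS P f ->
  Ibar TS f <= endowment P + \sum_(1 <= m <oo) (sp_V (P m))%:E.
Proof.
move=> hP hf hs.
have h0 : forall S, TS S -> 0 <= Phi P S.
  by move=> S hS; exact: le_trans (hf S hS) (hs S hS).
have hK' := Kstep hP h0.
have s0 := gen_sumV hP.
set s := \sum_(1 <= m <oo) (sp_V (P m))%:E in hK' s0 *.
rewrite /endowment -/s.
have [sinf|sfin] := eqVneq s +oo.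
  have hoo : forall x : R, x%:E + +oo + +oo = +oo :> \bar R by move=> x; rewrite !addey.
  by rewrite sinf hoo leey.
have fs : s \is a fin_num by rewrite ge0_fin_numE // ltey.
rewrite -(fineK fs) in hK' *; set t := fine s in hK' *.
have hg := H2 hK'.
rewrite -!EFinD; apply: le_eps => e he.
have /Ibar_lt [Q [hQ hsQ hQe]] : Ibar TS (fun S => (Num.max (twealth (P 0%N) S) 0%R)%:E) <
    (sp_V (P 0%N) + t + e)%:E.
  by apply: le_lt_trans hg _; rewrite lte_fin opprK addrC ltrDl.
have hpz := pos_pz hP.
apply: le_lt_trans (Ibar_le (pos_gD hQ hpz) _) _.
  move=> S hS; rewrite -/(Phi (gD Q (pz P)) S) (Phi_gD (pos_gen hQ) (pos_gen hpz) hS).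
  apply: le_trans (hs S hS) _; rewrite -/(Phi P S) /Phi.
  rewrite -/(Phi (pz P) S) Phi_pz; apply: leeD; last by [].
  apply: le_trans (hsQ S hS); by rewrite lee_fin le_max lexx.
rewrite (end_gD (pos_gen hQ) (pos_gen hpz)) end_pz -/s -(fineK fs) -/t.
have -> : (sp_V (P 0%N) + t + t + e = (sp_V (P 0%N) + t + e) + t)%R by ring.
by rewrite EFinD lte_leD.
Qed.

Lemma lemB f (x : R) : (forall S, TS S -> 0 <= f S) -> sigmabar TS f < x%:E -> Ibar TS f < x%:E.
Proof.
move=> hf /sig_lt [P [hP hs hx]].
have s0 := gen_sumV hP.
have fs : \sum_(1 <= m <oo) (sp_V (P m))%:E \is a fin_num.
  rewrite ge0_fin_numE // ltey; apply/eqP => hinf; move: hx.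
  by rewrite /endowment hinf addey // ltNge leey.
have hpz := pos_pz hP.
have vv0 : forall m, 0 <= (sp_V (pz P m))%:E.
  move=> [|m]; first by rewrite /pz /=.
  exact: (gen_V (pos_gen hpz)).
have hsum : \sum_(0 <= k <oo) (sp_V (pz P k))%:E = \sum_(1 <= m <oo) (sp_V (P m))%:E.
  rewrite nneseries_recl // (_ : (sp_V (pz P 0%N))%:E = 0) // add0e eseries_cond [RHS]eseries_cond.
  by apply: eq_eseriesr => -[|i].
have hlt : \sum_(0 <= k <oo | xpredT k) (sp_V (pz P k))%:E < +oo.
  by rewrite hsum -ge0_fin_numE.
have ht := nneseries_tail_cvg hlt (fun k _ => vv0 k).
have hE0 : endowment P = (sp_V (P 0%N) + fine (\sum_(1 <= m <oo) (sp_V (P m))%:E))%:E.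
  by rewrite EFinD fineK.
rewrite hE0 lte_fin in hx.
set V0 := sp_V (P 0%N) in hE0 hx.
set t := fine _ in hE0 hx.
have hd : (0 < (x - (V0 + t)) / 2)%R by rewrite divr_gt0 // subr_gt0.
have [N0 _ hN0] := cvg0_lt ht hd.
have hT : \sum_(N0.+1 <= k <oo | xpredT k) (sp_V (pz P k))%:E < ((x - (V0 + t)) / 2)%:E.
  by apply: hN0; rewrite /= leqnSn.
have hT' : \sum_(N0.+1 <= k <oo) (sp_V (P k))%:E < ((x - (V0 + t)) / 2)%:E.
  apply: le_lt_trans hT; rewrite le_eqVlt; apply/orP; left; apply/eqP.
  apply: congr_lim; apply/funext => n /=; apply: eq_big_nat => i /andP[hi _].
  by case: i hi.
have hPn := gen_Pn N0 hP.
have hsPn : superhedges TS (Pn P N0) f.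
  move=> S hS; apply: le_trans (hs S hS) _.
  rewrite (@F_Pn_all (fun p => twealth p S) (fun p q => twealth_spD p q S) (twealth_spc 0 S) P N0) //.
  by move=> m hm; case: (hP m hm) => _; apply.
have hB := lemB0 hPn hf hsPn.
have hE : endowment (Pn P N0) = endowment P.
  by rewrite /endowment (@F_Pn_all (@sp_V R) (fun p q => erefl) erefl P N0) // => m hm; case: (hP m hm).
have hV : \sum_(1 <= m <oo) (sp_V (Pn P N0 m))%:E = \sum_(N0.+1 <= m <oo) (sp_V (P m))%:E.
  by rewrite (@F_Pn (@sp_V R) erefl P N0) // => m hm; case: (hP m hm).
rewrite hE hV hE0 in hB; apply: le_lt_trans hB _.
apply: lt_le_trans (lee_ltD _ (lexx _) hT') _ => //.
by rewrite -EFinD lee_fin; lra.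
Qed.

Lemma pos_tw0 Q S : pos_gen_portfolio TS Q -> TS S -> twealth (Q 0%N) S = 0%R.
Proof. by move=> [_ h] hS; rewrite /twealth h. Qed.

Lemma Ibar_csub (F : nat -> traj R -> \bar R) : (forall k S, TS S -> 0 <= F k S) ->
  Ibar TS (fun S => \sum_(k <oo) F k S) <= \sum_(k <oo) Ibar TS (F k).
Proof.
move=> hF.
have I0 : forall k, 0 <= Ibar TS (F k) by move=> k; exact: Ibar_ge0.
have [Iinf|Ifin] := eqVneq (\sum_(k <oo) Ibar TS (F k)) +oo; first by rewrite Iinf leey.
have fk : forall k, Ibar TS (F k) \is a fin_num.
  move=> k; rewrite ge0_fin_numE // (le_lt_trans (term_le_ser k I0)) // ltey //.
apply/lee_addgt0Pr => e he.
have hQ : forall k, exists Q, [/\ pos_gen_portfolio TS Q, superhedges TS Q (F k) &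
    endowment Q < Ibar TS (F k) + (e / (2 ^ k.+1)%:R)%:E].
  move=> k; apply: Ibar_lt; rewrite lteDl // lte_fin divr_gt0 // ltr0n expn_gt0.
have [Qf hQf] := choice hQ.
have [phi hphi] := nat2_bij.
pose C := fun m => if m is m'.+1 then Qf (phi m').1 (phi m').2.+1 else (sp0 : simple_portfolio R).
have hC : pos_gen_portfolio TS C.
  split; last by move=> j S _; rewrite /C /= wealth_spc.
  move=> [|m] // _; rewrite /C; have [[hg _] _ _] := hQf (phi m).1; exact: hg.
apply: le_trans (Ibar_le hC _) _.
  move=> S hS; rewrite -/(Phi C S) /Phi /C /= twealth_spc add0e.
  rewrite ser_shift1; last by move=> [|m] // _; exact: (@gen_tw _ TS C m.+1 S (pos_gen hC) (ltn0Sn m) hS).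
  rewrite (@ser_double _ phi (fun k i => (twealth (Qf k i.+1) S)%:E)) //; last first.
    by move=> k i; have [hq _ _] := hQf k; exact: (gen_tw (pos_gen hq)).
  apply: lee_nneseries; first by move=> k _ _; exact: hF.
  move=> k _; have [hq hs _] := hQf k.
  apply: le_trans (hs S hS) _; rewrite -/(Phi (Qf k) S) /Phi (pos_tw0 hq hS) add0e.
  by rewrite ser_shift1 //; move=> m hm; exact: (gen_tw (pos_gen hq)).
rewrite /endowment /C /= add0e.
rewrite ser_shift1; last by move=> [|m] // _; exact: (@gen_V _ TS C m.+1 (pos_gen hC) (ltn0Sn m)).
rewrite (@ser_double _ phi (fun k i => (sp_V (Qf k i.+1))%:E)) //; last first.
  by move=> k i; have [hq _ _] := hQf k; exact: (gen_V (pos_gen hq)).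
apply: le_trans (epsilon_trick _ I0 (ltW he)).
apply: lee_nneseries; first by move=> k _ _; apply: nneseries_ge0 => i _ _; have [hq _ _] := hQf k; exact: (gen_V (pos_gen hq)).
move=> k _; have [hq _ hl] := hQf k; apply: le_trans (ltW hl).
rewrite /endowment (pos_V0 hq) add0e ser_shift1 //.
by move=> m hm; exact: (gen_V (pos_gen hq)).
Qed.

Lemma ser_big (r : R) : (0 <= r)%R -> r%:E <= \sum_(k <oo) (1%R)%:E.
Proof.
move=> hr; apply: le_trans (nneseries_lim_ge (Num.bound r) _); last by move=> n _ _.
rewrite sumEFin lee_fin sumr_const_nat subn0.
by apply: ltW; exact: archi_boundP.
Qed.

Lemma SP1 (A : set (traj R)) (h : traj R -> R) : Defs.null_set TS A ->
  (forall S, TS S -> ~ A S -> (0 <= h S)%R) -> sig h <= 0 ->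
  Ibar TS (fun S => (if S \in A then 0%R else h S)%:E) <= 0.
Proof.
move=> hA hpos hsig.
pose u S := if S \in A then 0%R else h S.
pose w S := if S \in A then (- h S)%R else 0%R.
have hu0 : forall S, TS S -> 0 <= (u S)%:E.
  move=> S hS; rewrite /u lee_fin; case: ifPn => // /negP hn.
  by apply: hpos => // hAS; apply: hn; exact: mem_set.
apply: (@le_eps _ _ 0%R) => e he; rewrite add0r.
apply: lemB; first exact: hu0.
have -> : (fun S => (u S)%:E) = (fun S => (h S + w S)%R%:E).
  by apply: funext => S; rewrite /u /w; case: ifP => _; rewrite ?subrr ?addr0.
have -> : e = (e / 2 + e / 2)%R by field.
apply: sig_addR.
  by apply: le_lt_trans hsig _; rewrite lte_fin divr_gt0.
apply: le_lt_trans (sig_le_norm _) _.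
apply: (@le_lt_trans _ _ (Ibar TS (fun S => \sum_(k <oo) (\1_A S : R)%:E))).
  apply: Ibar_mono => S hS; rewrite /w indicE; case: ifP => _.
    exact: ser_big.
  by rewrite normr0; apply: nneseries_ge0 => k _ _; rewrite lee_fin.
apply: le_lt_trans (Ibar_csub _) _.
  by move=> k S _; rewrite lee_fin indicE.
rewrite eseries0 ?lte_fin ?divr_gt0 //.
Qed.

Lemma strict_pos f g : L1K TS f -> L1K TS g ->
  ae TS (fun S => (g S <= f S)%R) -> intK TS f = intK TS g ->
  ae TS (fun S => f S = g S).
Proof.
move=> /L1K_val vf /L1K_val vg [A [hA hAle]] hfg.
have vh := val_D vf (val_N vg); rewrite hfg subrr in vh.
set h := (fun S => f S + - g S)%R in vh.
have hpos : forall S, TS S -> ~ A S -> (0 <= h S)%R.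
  by move=> S hS hnA; rewrite /h subr_ge0; exact: hAle.
pose u S := if S \in A then 0%R else h S.
pose F k S := (\1_A S + k%:R * u S)%R%:E.
have hF0 : forall k S, TS S -> 0 <= F k S.
  move=> k S hS; rewrite /F lee_fin /u indicE; case: ifPn => hS'.
    by rewrite mulr0 addr0.
  rewrite add0r mulr_ge0 //; apply: hpos => // hAS; move/negP: hS'; apply; exact: mem_set.
have hFk : forall k, Ibar TS (F k) <= 0.
  move=> k; apply: (@le_eps _ _ 0%R) => e he; rewrite add0r.
  apply: lemB; first exact: hF0.
  have -> : e = (e / 2 + e / 2)%R by field.
  apply: sig_addR.
    apply: le_lt_trans (sig_le_Ibar _) _; rewrite hA lte_fin divr_gt0 //.
  apply: le_lt_trans (sig_le_Ibar _) _.
  have -> : (fun S => (k%:R * u S)%R%:E) = (fun S => (if S \in A then 0%R else (k%:R * h S)%R)%:E).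
    by apply: funext => S; rewrite /u; case: ifP; rewrite ?mulr0.
  apply: le_lt_trans (SP1 hA _ _) _; last by rewrite lte_fin divr_gt0.
    by move=> S hS hnA; rewrite mulr_ge0 // hpos.
  by have [-> _] := val_Z k%:R vh; rewrite mulr0.
exists (fun S => A S \/ f S <> g S); split; last first.
  move=> S hS hC; apply: contrapT => hne; apply: hC; by right.
apply/le_anti/andP; split; last exact: Ibar_ge0.
apply: (@le_trans _ _ (Ibar TS (fun S => \sum_(k <oo) F k S))).
  apply: Ibar_mono => S hS; rewrite indicE; case: (boolP (S \in _)) => hC; last first.
    by apply: nneseries_ge0 => k _ _; exact: hF0.
  have [hAS|hnA] := pselect (A S).
    apply: le_trans (term_le_ser 0 (fun k => hF0 k S hS)).
    by rewrite /F /u indicE (mem_set hAS) mulr0 addr0.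
  have hne : f S <> g S.
    by move: hC => /set_mem [//|].
  have hlt : (0 < h S)%R.
    rewrite lt_neqAle hpos // andbT eq_sym /h subr_eq0; exact/eqP.
  apply: le_trans (term_le_ser (Num.bound (h S)^-1) (fun k => hF0 k S hS)).
  have hnA' : (S \in A) = false by apply/negP => /set_mem.
  rewrite /F /u indicE hnA' add0r lee_fin.
  rewrite -ler_pdivrMr // div1r.
  by apply: ltW; apply: archi_boundP; rewrite invr_ge0 ltW.
apply: le_trans (Ibar_csub hF0) _.
by rewrite eseries0 // => k _ _; apply/le_anti/andP; split; [exact: hFk|exact: Ibar_ge0].
Qed.

Local Open Scope ring_scope.

Lemma main_thm :
  [/\ L1K TS (fun _ => 0),
      (forall f g, L1K TS f -> L1K TS g -> L1K TS (fun S => f S + g S)),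
      (forall (c : R) f, L1K TS f -> L1K TS (fun S => c * f S)) &
      (forall p : simple_portfolio R, L1K TS (twealth p))] /\
  (forall p : simple_portfolio R, intK TS (twealth p) = sp_V p) /\
  (forall f g, L1K TS f -> L1K TS g ->
     intK TS (fun S => f S + g S) = intK TS f + intK TS g) /\
  (forall (c : R) f, L1K TS f -> intK TS (fun S => c * f S) = c * intK TS f) /\
  (forall f, L1K TS f -> (forall S, TS S -> 0 <= f S) -> 0 <= intK TS f) /\
  (forall c : R, intK TS (fun _ => c) = c) /\
  (forall (f : traj R -> R) (fn : nat -> traj R -> R),
     L1K TS f -> (forall n, L1K TS (fn n)) ->
     normK TS (fun S => fn n S - f S) @[n --> \oo] --> 0%E ->
     intK TS (fn n) @[n --> \oo] --> intK TS f) /\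
  (forall f g, L1K TS f -> L1K TS g ->
     ae TS (fun S => g S <= f S) -> intK TS f = intK TS g ->
     ae TS (fun S => f S = g S)).
Proof.
split.
  split.
  - exact: (val_L1K (val_cst 0)).1.
  - by move=> f g hf hg; exact: (val_L1K (val_D (L1K_val hf) (L1K_val hg))).1.
  - by move=> c f hf; exact: (val_L1K (val_Z c (L1K_val hf))).1.
  - by move=> p; exact: (val_L1K (val_tw p)).1.
split; first by move=> p; exact: (val_L1K (val_tw p)).2.
split; first by move=> f g hf hg; exact: (val_L1K (val_D (L1K_val hf) (L1K_val hg))).2.
split; first by move=> c f hf; exact: (val_L1K (val_Z c (L1K_val hf))).2.
split; first by move=> f hf hpos; exact: val_pos (L1K_val hf) hpos.
split; first by move=> c; exact: (val_L1K (val_cst c)).2.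
split; last by move=> f g hf hg; exact: strict_pos.
move=> f fn hf hfn hcvg; apply/cvgrPdist_lt => e he.
have he2 : 0 < e / 2 by rewrite divr_gt0.
apply: filterS (cvg0_lt hcvg he2) => n hn.
have := val_close (L1K_val hf) (L1K_val (hfn n)) hn.
by have -> : e / 2 + e / 2 = e by field.
Qed.

End Main.

Unset Implicit Arguments.

Theorem theorem4p3 (R : realType) (s0 : R) (TS : set (traj R)) :
  trajectory_set s0 TS -> LOP TS -> condK TS ->
  [/\ L1K TS (fun _ => 0),
      (forall f g, L1K TS f -> L1K TS g -> L1K TS (fun S => f S + g S)),
      (forall (c : R) f, L1K TS f -> L1K TS (fun S => c * f S)) &
  (* containing E *)
      (forall p : simple_portfolio R, L1K TS (twealth p))] /\
  (* int_(K) extends I *)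
  (forall p : simple_portfolio R, intK TS (twealth p) = sp_V p) /\
  (* linear *)
  (forall f g, L1K TS f -> L1K TS g ->
     intK TS (fun S => f S + g S) = intK TS f + intK TS g) /\
  (forall (c : R) f, L1K TS f -> intK TS (fun S => c * f S) = c * intK TS f) /\
  (* positive *)
  (forall f, L1K TS f -> (forall S, TS S -> 0 <= f S) -> 0 <= intK TS f) /\
  (* constant-preserving *)
  (forall c : R, intK TS (fun _ => c) = c) /\
  (* continuity w.r.t. ||.|| *)
  (forall (f : traj R -> R) (fn : nat -> traj R -> R),
     L1K TS f -> (forall n, L1K TS (fn n)) ->
     normK TS (fun S => fn n S - f S) @[n --> \oo] --> 0%E ->
     intK TS (fn n) @[n --> \oo] --> intK TS f) /\
  (* strictly positive *)
  (forall f g, L1K TS f -> L1K TS g ->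
     ae TS (fun S => g S <= f S) -> intK TS f = intK TS g ->
     ae TS (fun S => f S = g S)).
Proof. by move=> _ hL hK; exact: (main_thm hL hK). Qed.
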